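(* Let $\mathcal{D}$ be a domain and $c\ge1$. Let $\sigma$ be distributed according to $\mathsf{Spin}_{\mathcal{D},c}^{++}$ and let $\xi$ be the FK--Ising representation constructed from $\sigma$. Then: (i) the joint law of $(\sigma,\xi)$ is proportional to $(c-1)^{|\xi|-|\omega(\sigma^\bullet)|}\mathbf 1_{\sigma^\circ\perp\xi}\mathbf 1_{\sigma^\bullet\perp\xi}$; (ii) the law $\mathsf{FKIs}_{\mathcal{D}^\circ,c}$ of $\xi$ satisfies \[\mathsf{FKIs}_{\mathcal{D}^\circ,c}(\xi)=\frac{1}{2Z}(c-1)^{|\xi|}2^{k(\xi^1)}\sum_{\sigma^\bullet\colon\omega(\sigma^\bullet)\subset\xi}\Big(\frac{1}{c-1}\Big)^{|\omega(\sigma^\bullet)|}\] for a normalizing constant $Z$ not depending on $\xi$, where the sum is over spin configurations $\sigma^\bullet$ on the vertices of $\mathcal{D}^\bullet$ equal to $+1$ at corners; (iii) if $\xi$ is sampled from $\mathsf{FKIs}_{\mathcal{D}^\circ,c}$ and one assigns $+1$ to all boundary clusters of $\xi$ and, independently, $+1$ or $-1$ with probability $1/2$ each to every other cluster of $\xi$, the resulting spin configuration has the law of the marginal of $\mathsf{Spin}_{\mathcal{D},c}^{++}$ on $\sigma^\circ$.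
   Context: Weights $a=b=1$, $c\ge1$. Faces of $\mathbb{Z}^2$ are centered at integer points; the face $(i,j)$ is even if $i+j$ is even, odd otherwise. A domain $\mathcal{D}$ is a finite subgraph of $\mathbb{Z}^2$ consisting of a simple cycle $\partial\mathcal{D}$ with everything it encloses. An ice-rule spin configuration is $\sigma\colon F(\mathbb{Z}^2)\to\{\pm1\}$ such that around every vertex at least one diagonal pair of faces has equal spins; a vertex is of type $c$ if both diagonal pairs agree. $\mathsf{Spin}_{\mathcal{D},c}^{++}$ is the measure on ice-rule configurations equal to $+1$ on all faces outside $\mathcal{D}$, proportional to $c^{N_c}$, $N_c$ the number of type-$c$ vertices of $\mathcal{D}$. A corner of $\mathcal{D}$ is a pair $(u,z)$ with $u$ a face outside $\mathcal{D}$ sharing an edge with a face of $\mathcal{D}$ and $z$ a vertex of $\partial\mathcal{D}$ on $u$, even/odd according to $u$. $\mathcal{D}^\bullet$ is the graph on even faces of $\mathcal{D}$ and even corners with edges between even faces of $\mathcal{D}$ sharing a vertex, between a corner $(u,z)$ and an even face $v\ni z$ of $\mathcal{D}$, and between corners $(u,z),(v,z)$; corners $(u,z),(u,z')$ are identified when $zz'$ is an edge of $\mathcal{D}$. $\mathcal{D}^\circ$ is defined likewise with odd faces and corners. Edges of both are in bijection with vertices of $\mathcal{D}$ and $e\in E(\mathcal{D}^\circ)$, $e^*\in E(\mathcal{D}^\bullet)$ denote dual edges. Spins are extended to corners by $\sigma(u,z)=\sigma(u)$; $\sigma^\bullet,\sigma^\circ$ are the restrictions to vertices of $\mathcal{D}^\bullet$,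 $\mathcal{D}^\circ$. $\theta(\sigma^\circ)\subset E(\mathcal{D}^\circ)$ is the set of edges whose endpoints have different $\sigma^\circ$ spins; $\omega(\sigma^\bullet)\subset E(\mathcal{D}^\circ)$ is the set of edges $e$ whose dual $e^*$ has endpoints with different $\sigma^\bullet$ spins. Given $\sigma$, the FK--Ising representation $\xi\in\{0,1\}^{E(\mathcal{D}^\circ)}$ (identified with its set of open edges) is: $\xi(e)=0$ if $e\in\theta(\sigma^\circ)$, $\xi(e)=1$ if $e\in\omega(\sigma^\bullet)$, and otherwise independently $\xi(e)=1$ with probability $(c-1)/c$. $\xi^*\in\{0,1\}^{E(\mathcal{D}^\bullet)}$ is $\xi^*(e^* )=1-\xi(e)$. $\sigma^\circ\perp\xi$ means $\sigma^\circ$ is constant on every cluster of $\xi$; $\sigma^\bullet\perp\xi$ means $\sigma^\bullet$ is constant on every cluster of $\xi^*$. Boundary clusters of $\xi$ are those containing a corner; $\xi^1$ is $\xi$ with all corner vertices merged into one vertex, and $k(\xi^1)$ is its number of clusters. *)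

(* Defs.v *)
From HB Require Import structures.
From mathcomp Require Import all_boot all_order all_algebra.
Set Implicit Arguments. Unset Strict Implicit. Unset Printing Implicit Defensive.
Import Order.TTheory GRing.Theory Num.Theory.

Local Open Scope ring_scope.

(** * Geometry of Z^2.
   A face of Z^2 is identified with its center (i,j) : int * int.
   A vertex of Z^2 is encoded by (a,b) : int * int, standing for the point
   (a + 1/2, b + 1/2). *)
Definition pt := (int * int)%type.

Definition fpar (f : pt) : bool := odd (absz (f.1 + f.2)).

Definition face_vertices (f : pt) : seq pt :=
  [:: (f.1 - 1, f.2 - 1); (f.1, f.2 - 1); (f.1 - 1, f.2); f].

Definition faces_around (z : pt) : seq pt :=
  [:: z; (z.1 + 1, z.2); (z.1, z.2 + 1); (z.1 + 1, z.2 + 1)].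

Definition vadj : rel pt := fun z z' =>
  (absz (z.1 - z'.1) + absz (z.2 - z'.2) == 1)%N.

Definition simple_cycle (p : seq pt) : bool :=
  [&& (3 <= size p)%N, uniq p & cycle vadj p].

(** the edge e of Z^2 crosses the horizontal half-line going from the
    center of face f to the right *)
Definition crosses (f : pt) (e : pt * pt) : bool :=
  let: (z, z') := e in
  [&& z.1 == z'.1, f.1 <= z.1 &
      ((z.2 == f.2 - 1) && (z'.2 == f.2)) || ((z.2 == f.2) && (z'.2 == f.2 - 1))].

(** face f is enclosed by the cycle p (ray-crossing parity) *)
Definition enclosed (p : seq pt) (f : pt) : bool :=
  odd (count (crosses f) (zip p (rot 1 p))).

Definition is_domain (D : seq pt) : Prop :=
  exists p : seq pt, simple_cycle p /\ forall f : pt, (f \in D) = enclosed p f.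

Section Domain.
Variable D : seq pt.

Definition vtxs : seq pt := undup (flatten (map face_vertices D)).
(** vertices of D = edges of D° (and of D•) *)
Definition VtxT := seq_sub vtxs.
Definition FaceT := seq_sub D.

Definition edgeD (z z' : pt) : bool :=
  vadj z z' && has (fun u => (u \in D) && (u \in faces_around z')) (faces_around z).

(** vertices of D° / D• : (f, None) is the face f of D,
    (u, Some z) is the corner (u, z). *)
Definition node := (pt * option pt)%type.

Definition is_corner (x : node) : bool := x.2 != None.

(** par = true : D° (odd faces and corners); par = false : D• (even). *)
Definition nodes (par : bool) : seq node :=
  [seq (f, None) | f <- D & fpar f == par] ++
  flatten [seq [seq (u, Some z) | u <- faces_around z & (u \notin D) && (fpar u == par)]
          | z <- vtxs].

Definition NodeT (par : bool) := seq_sub (nodes par).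

Definition dnode (z f : pt) : node := if f \in D then (f, None) else (f, Some z).

(** endpoints of the edge of D° (par = true) or D• (par = false)
    associated with the vertex z of D *)
Definition ends (par : bool) (z : pt) : node * node :=
  let: (a, b) := z in
  if fpar (a, b) == par then (dnode z (a, b), dnode z (a + 1, b + 1))
  else (dnode z (a + 1, b), dnode z (a, b + 1)).

(** identification of corners (u,z) ~ (u,z') when zz' is an edge of D *)
Definition glue (x y : node) : bool :=
  match x, y with
  | (u, Some z), (u', Some z') => (u == u') && edgeD z z'
  | _, _ => false
  end.

Definition gadj (par : bool) (op : pred VtxT) : rel (NodeT par) := fun x y =>
  [exists z : VtxT, op z &&
     (let e := ends par (val z) in
      ((e.1 == val x) && (e.2 == val y)) || ((e.1 == val y) && (e.2 == val x)))]
  || glue (val x) (val y).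

Definition clusters (T : finType) (e : rel T) : {set {set T}} :=
  [set [set y | connect e x y] | x : T].

(** spin configurations on faces of D; true = +1, false = -1 *)
Definition spin (sigma : {ffun FaceT -> bool}) (u : pt) : bool :=
  match (insub u : option FaceT) with Some f => sigma f | None => true end.

(** ice rule, checked at the vertices of D (at any other vertex of Z^2 all
    four faces lie outside D and carry spin +1, so it holds trivially) *)
Definition ice (sigma : {ffun FaceT -> bool}) : bool :=
  [forall z : VtxT, let: (a, b) := val z in
     (spin sigma (a, b) == spin sigma (a + 1, b + 1))
     || (spin sigma (a + 1, b) == spin sigma (a, b + 1))].

Definition typec (sigma : {ffun FaceT -> bool}) (z : pt) : bool :=
  let: (a, b) := z in
  (spin sigma (a, b) == spin sigma (a + 1, b + 1))
  && (spin sigma (a + 1, b) == spin sigma (a, b + 1)).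

Definition Nc (sigma : {ffun FaceT -> bool}) : nat :=
  #|[set z : VtxT | typec sigma (val z)]|.

(** sigma° and sigma• (spins extended to corners by sigma(u,z) = sigma(u)) *)
Definition sig_of (par : bool) (sigma : {ffun FaceT -> bool}) : {ffun NodeT par -> bool} :=
  [ffun x => spin sigma (val x).1].

Definition nval (par : bool) (s : {ffun NodeT par -> bool}) (x : node) : bool :=
  match (insub x : option (NodeT par)) with Some y => s y | None => true end.

(** theta(sigma°) and omega(sigma•), as sets of edges of D° (indexed by VtxT) *)
Definition theta (s : {ffun NodeT true -> bool}) (z : VtxT) : bool :=
  let e := ends true (val z) in nval s e.1 != nval s e.2.
Definition omega (s : {ffun NodeT false -> bool}) (z : VtxT) : bool :=
  let e := ends false (val z) in nval s e.1 != nval s e.2.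

(** FK configurations xi : set of open edges of D° *)
Definition nopen (xi : {ffun VtxT -> bool}) : nat := #|[set z | xi z]|.
Definition nomega (s : {ffun NodeT false -> bool}) : nat := #|[set z | omega s z]|.

Definition adjo (xi : {ffun VtxT -> bool}) : rel (NodeT true) := @gadj true (fun z => xi z).
Definition adjb (xi : {ffun VtxT -> bool}) : rel (NodeT false) :=
  @gadj false (fun z => ~~ xi z).

Definition perpo (s : {ffun NodeT true -> bool}) (xi : {ffun VtxT -> bool}) : bool :=
  [forall x, forall y, connect (adjo xi) x y ==> (s x == s y)].
Definition perpb (s : {ffun NodeT false -> bool}) (xi : {ffun VtxT -> bool}) : bool :=
  [forall x, forall y, connect (adjb xi) x y ==> (s x == s y)].

(** xi^1 : all corner vertices merged into one; k(xi^1) *)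
Definition adj1 (xi : {ffun VtxT -> bool}) : rel (NodeT true) := fun x y =>
  adjo xi x y || (is_corner (val x) && is_corner (val y)).
Definition k1 (xi : {ffun VtxT -> bool}) : nat := #|clusters (adj1 xi)|.

Definition nbclusters (xi : {ffun VtxT -> bool}) : nat :=
  #|[set C in clusters (adjo xi) | [forall y in C, ~~ is_corner (val y)]]|.

Definition bplus (tau : {ffun NodeT true -> bool}) (xi : {ffun VtxT -> bool}) : bool :=
  [forall x, forall y, (connect (adjo xi) x y && is_corner (val y)) ==> tau x].

Variable R : realFieldType.
Variable c : R.

Definition ind (b : bool) : R := if b then 1 else 0.

Definition SpinZ : R := \sum_(sigma : {ffun FaceT -> bool} | ice sigma) c ^+ Nc sigma.

Definition SpinP (sigma : {ffun FaceT -> bool}) : R :=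
  if ice sigma then c ^+ Nc sigma / SpinZ else 0.

(** conditional law of xi(e) given sigma *)
Definition fkfac (sigma : {ffun FaceT -> bool}) (xi : {ffun VtxT -> bool}) (z : VtxT) : R :=
  if theta (sig_of true sigma) z then (if xi z then 0 else 1)
  else if omega (sig_of false sigma) z then (if xi z then 1 else 0)
  else (if xi z then (c - 1) / c else c^-1).

Definition Joint (sigma : {ffun FaceT -> bool}) (xi : {ffun VtxT -> bool}) : R :=
  SpinP sigma * \prod_(z : VtxT) fkfac sigma xi z.

Definition FKIs (xi : {ffun VtxT -> bool}) : R :=
  \sum_(sigma : {ffun FaceT -> bool}) Joint sigma xi.

(** probability that the cluster-wise random assignment described in (iii)
    produces the configuration tau, given xi *)
Definition assignP (xi : {ffun VtxT -> bool}) (tau : {ffun NodeT true -> bool}) : R :=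
  if perpo tau xi && bplus tau xi then (2^-1) ^+ nbclusters xi else 0.

End Domain.

(* Main.v *)
Require Import Defs.
From HB Require Import structures.
From mathcomp Require Import all_boot all_order all_algebra.
From mathcomp Require Import ring lra.
Set Implicit Arguments. Unset Strict Implicit. Unset Printing Implicit Defensive.
Import Order.TTheory GRing.Theory Num.Theory.
Local Open Scope ring_scope.

Lemma odd_abs1 (x : int) : odd (absz (x + 1)) = ~~ odd (absz x).
Proof.
case: x => n; first by rewrite /= addn1.
rewrite NegzE.
have -> : - (n.+1%:Z) + 1 = - (n%:Z).
  by rewrite -addn1 PoszD opprD addrK.
by rewrite !abszN /= negbK.
Qed.

Lemma fpar_x1 (a b : int) : fpar (a + 1, b) = ~~ fpar (a, b).
Proof. by rewrite /fpar /= addrAC odd_abs1. Qed.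
Lemma fpar_y1 (a b : int) : fpar (a, b + 1) = ~~ fpar (a, b).
Proof. by rewrite /fpar /= addrA odd_abs1. Qed.
Lemma fpar_xy1 (a b : int) : fpar (a + 1, b + 1) = fpar (a, b).
Proof. by rewrite fpar_y1 fpar_x1 negbK. Qed.

Section Geo.
Variable D : seq pt.

Lemma spin_val (s : {ffun FaceT D -> bool}) (f : FaceT D) : spin s (val f) = s f.
Proof. by rewrite /spin valK. Qed.

Lemma spin_out (s : {ffun FaceT D -> bool}) u : u \notin D -> spin s u = true.
Proof. by move=> h; rewrite /spin insubN. Qed.

Lemma nodesP par (x : node) : x \in nodes D par ->
  fpar x.1 = par /\ (x.1 \in D) = (x.2 == None).
Proof.
rewrite mem_cat => /orP [/mapP [f] | /flatten_mapP [z _ /mapP [u]]].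
  by rewrite mem_filter => /andP [/eqP hp hD] -> /=.
by rewrite mem_filter => /andP [/andP [hD /eqP hp] _] -> /=; rewrite (negbTE hD).
Qed.

Lemma dnode_fst z f : (dnode D z f).1 = f.
Proof. by rewrite /dnode; case: ifP. Qed.

Lemma dnode_nodes par z f : z \in vtxs D -> f \in faces_around z -> fpar f = par ->
  dnode D z f \in nodes D par.
Proof.
move=> hz hf hp; rewrite /dnode /nodes mem_cat; case: ifP => hD.
  by apply/orP; left; apply/mapP; exists f => //; rewrite mem_filter hD hp eqxx.
apply/orP; right; apply/flatten_mapP; exists z => //.
by apply/mapP; exists f => //; rewrite mem_filter hf hD hp eqxx.
Qed.

Lemma ends_nodes par (z : VtxT D) :
  ((ends D par (val z)).1 \in nodes D par) && ((ends D par (val z)).2 \in nodes D par).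
Proof.
have hz : val z \in vtxs D := valP z.
move: hz; case: (val z) => a b hz /=.
case: ifP => /eqP hp /=.
  by rewrite !dnode_nodes // ?fpar_xy1 // /faces_around !inE eqxx ?orbT.
rewrite !dnode_nodes // /faces_around ?inE ?eqxx ?orbT //.
  by rewrite fpar_y1; case: par hp; case: fpar.
by rewrite fpar_x1; case: par hp; case: fpar.
Qed.

Lemma nval_val par (s : {ffun NodeT D par -> bool}) (y : NodeT D par) : nval s (val y) = s y.
Proof. by rewrite /nval valK. Qed.

Lemma nval_sig par (s : {ffun FaceT D -> bool}) x : x \in nodes D par ->
  nval (sig_of par s) x = spin s x.1.
Proof. by move=> hx; rewrite /nval; case: insubP => [y _ <-|]; [rewrite ffunE | rewrite hx]. Qed.


Definition d1 (s : {ffun FaceT D -> bool}) (p : pt) := spin s p != spin s (p.1 + 1, p.2 + 1).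
Definition d2 (s : {ffun FaceT D -> bool}) (p : pt) := spin s (p.1 + 1, p.2) != spin s (p.1, p.2 + 1).

Lemma theta_sig s (z : VtxT D) :
  theta (sig_of true s) z = if fpar (val z) then d1 s (val z) else d2 s (val z).
Proof.
rewrite /theta; case/andP: (ends_nodes true z) => h1 h2; rewrite !nval_sig //.
case: (val z) => a b /=; rewrite /d1 /d2 /=.
by case: (fpar (a, b)) => /=; rewrite !dnode_fst.
Qed.

Lemma omega_sig s (z : VtxT D) :
  omega (sig_of false s) z = if fpar (val z) then d2 s (val z) else d1 s (val z).
Proof.
rewrite /omega; case/andP: (ends_nodes false z) => h1 h2; rewrite !nval_sig //.
case: (val z) => a b /=; rewrite /d1 /d2 /=.
by case: (fpar (a, b)) => /=; rewrite !dnode_fst.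
Qed.

Lemma ice_d s : ice s = [forall z : VtxT D, ~~ (d1 s (val z) && d2 s (val z))].
Proof.
apply: eq_forallb => z; rewrite /d1 /d2; case: (val z) => a b /=.
by rewrite negb_and !negbK.
Qed.

Lemma typec_d s p : typec s p = ~~ d1 s p && ~~ d2 s p.
Proof. by rewrite /d1 /d2; case: p => a b /=; rewrite !negbK. Qed.


Section Perp.
Variables (par : bool) (op : pred (VtxT D)) (s : {ffun NodeT D par -> bool}).
Hypothesis Hg : forall x y : NodeT D par, glue D (val x) (val y) -> s x = s y.
Let e := ends D par.

Lemma perp_gen :
  [forall x, forall y, connect (gadj op) x y ==> (s x == s y)] =
  [forall z : VtxT D, op z ==> (nval s (e (val z)).1 == nval s (e (val z)).2)].
Proof.
apply/idP/idP.
  move=> /forallP H; apply/forallP => z; apply/implyP => hz.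
  case/andP: (ends_nodes par z) => h1 h2.
  pose x := (SeqSub h1 : NodeT D par); pose y := (SeqSub h2 : NodeT D par).
  have hc : connect (gadj op) x y.
    apply: connect1; rewrite /gadj; apply/orP; left; apply/existsP; exists z.
    by rewrite hz /= !eqxx.
  move: (forallP (H x) y); rewrite hc /= => /eqP hxy.
  have -> : (e (val z)).1 = val x by [].
  have -> : (e (val z)).2 = val y by [].
  by rewrite !nval_val hxy.
move=> /forallP H.
have step : forall x w, gadj op x w -> s x = s w.
  move=> x w; case/orP => [/existsP [z /andP [hz he]] | hg]; last exact: Hg.
  move: (implyP (H z) hz) => /eqP heq.
  case/orP: he => /andP [/eqP e1 /eqP e2]; rewrite /e in heq.
    by rewrite e1 e2 !nval_val in heq.
  by rewrite e1 e2 !nval_val in heq.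
apply/forallP => x; apply/forallP => y; apply/implyP => /connectP [p hp ->].
elim: p x hp => [|w p IH] x /=; first by [].
case/andP => hxw hpath; rewrite (step _ _ hxw); exact: IH.
Qed.
End Perp.


Lemma glue_sig par (sg : {ffun FaceT D -> bool}) (x y : NodeT D par) :
  glue D (val x) (val y) -> sig_of par sg x = sig_of par sg y.
Proof.
rewrite !ffunE; case: (val x) => u [z|] //; case: (val y) => u' [z'|] //=.
by case/andP => /eqP ->.
Qed.

Definition cornT par (s : {ffun NodeT D par -> bool}) :=
  [forall x, is_corner (val x) ==> s x].

Lemma glue_corn par (s : {ffun NodeT D par -> bool}) (x y : NodeT D par) :
  cornT s -> glue D (val x) (val y) -> s x = s y.
Proof.
move=> /forallP H.
have hx := implyP (H x); have hy := implyP (H y).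
rewrite /is_corner in hx hy.
move: hx hy; case: (val x) => u [z|] //; case: (val y) => u' [z'|] //= hx hy _.
by rewrite hx // hy.
Qed.

Lemma perpo_gen (s : {ffun NodeT D true -> bool}) xi :
  (forall x y : NodeT D true, glue D (val x) (val y) -> s x = s y) ->
  perpo s xi = [forall z, xi z ==> ~~ theta s z].
Proof.
move=> Hg; rewrite /perpo /adjo (perp_gen _ Hg); apply: eq_forallb => z.
by rewrite /theta negbK.
Qed.

Lemma perpb_gen (s : {ffun NodeT D false -> bool}) xi :
  (forall x y : NodeT D false, glue D (val x) (val y) -> s x = s y) ->
  perpb s xi = [forall z, ~~ xi z ==> ~~ omega s z].
Proof.
move=> Hg; rewrite /perpb /adjb (perp_gen _ Hg); apply: eq_forallb => z.
by rewrite /omega negbK.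
Qed.


Section Meas.
Variables (R : realFieldType) (c : R).
Hypothesis hc : 1 <= c.

Lemma c_gt0 : 0 < c. Proof. exact: lt_le_trans ltr01 hc. Qed.
Lemma c_neq0 : c != 0. Proof. by rewrite gt_eqF // c_gt0. Qed.

Lemma SpinZ_gt0 : 0 < SpinZ D c.
Proof.
pose s1 : {ffun FaceT D -> bool} := [ffun => true].
have hs1 : ice s1.
  rewrite ice_d; apply/forallP => z.
  have hsp : forall u, spin s1 u = true.
    by move=> u; rewrite /spin; case: insub => [?|] //; rewrite ffunE.
  by rewrite /d1 /d2 !hsp.
rewrite /SpinZ (bigD1 s1) //.
have h1 : 0 < c ^+ Nc s1 by rewrite exprn_gt0 // c_gt0.
have h2 : 0 <= \sum_(i | ice i && (i != s1)) c ^+ Nc i.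
  by apply: sumr_ge0 => i _; rewrite exprn_ge0 // ltW // c_gt0.
by apply: lt_le_trans h1 _; rewrite lerDl h2.
Qed.

Lemma Joint_eq (sg : {ffun FaceT D -> bool}) (xi : {ffun VtxT D -> bool}) :
  Joint c sg xi = (SpinZ D c)^-1 *
   ((c - 1) ^+ (nopen xi - nomega (sig_of false sg))%N
     * ind R (perpo (sig_of true sg) xi) * ind R (perpb (sig_of false sg) xi)).
Proof.
rewrite perpo_gen; last exact: glue_sig.
rewrite perpb_gen; last exact: glue_sig.
pose t z := theta (sig_of true sg) z.
pose w z := omega (sig_of false sg) z.
have hice : ice sg = [forall z, ~~ (t z && w z)].
  rewrite ice_d; apply: eq_forallb => z; rewrite /t /w theta_sig omega_sig.
  by case: fpar; rewrite // andbC.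
have htc : forall z : VtxT D, typec sg (val z) = ~~ t z && ~~ w z.
  move=> z; rewrite typec_d /t /w theta_sig omega_sig.
  by case: fpar; rewrite // andbC.
have fk : forall z, fkfac c sg xi z = if t z then (if xi z then 0 else 1)
    else if w z then (if xi z then 1 else 0) else (if xi z then (c - 1) / c else c^-1).
  by [].
rewrite -/(t _) -/(w _).
case: (boolP ([forall z, xi z ==> ~~ t z] && [forall z, ~~ xi z ==> ~~ w z])) => P.
  case/andP: (P) => P1 P2; rewrite P1 P2 /= !mulr1.
  have hi : ice sg.
    rewrite hice; apply/forallP => z.
    by move: (forallP P1 z) (forallP P2 z); case: (xi z); case: (t z); case: (w z).
  rewrite /Joint /SpinP hi.
  have -> : \prod_z fkfac c sg xi z =
      \prod_z ((if typec sg (val z) then c^-1 else 1) * (if typec sg (val z) && xi z then c - 1 else 1)).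
    apply: eq_bigr => z _; rewrite fk htc.
    move: (forallP P1 z) (forallP P2 z).
    by case: (xi z); case: (t z); case: (w z) => //= _ _; rewrite ?mulr1 ?mul1r // mulrC.
  rewrite big_split /= -!big_mkcond /= !prodr_const.
  have -> : #|(fun z : VtxT D => typec sg (val z))| = Nc sg.
    by rewrite /Nc; apply: eq_card => z; rewrite !inE.
  have -> : (nopen xi - nomega (sig_of false sg))%N = #|(fun z : VtxT D => typec sg (val z) && xi z)|.
    rewrite /nopen /nomega -(cardID [set z | omega (sig_of false sg) z] [set z | xi z]).
    have -> : #|[predI [set z | xi z] & [set z | omega (sig_of false sg) z]]| =
              #|[set z | omega (sig_of false sg) z]|.
      apply: eq_card => z; rewrite !inE -/(w z).
      by move: (forallP P2 z); case: (xi z); case: (w z).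
    rewrite addKn; apply: eq_card => z; rewrite !inE -/(w z) unfold_in /= htc.
    by move: (forallP P1 z); case: (xi z); case: (t z); case: (w z).
  rewrite exprVn.
  have h0 : SpinZ D c != 0 by rewrite gt_eqF // SpinZ_gt0.
  have h1 : c ^+ Nc sg != 0 by rewrite expf_neq0 // c_neq0.
  set X := (c - 1) ^+ _; move: (c ^+ Nc sg) h1 (SpinZ D c) h0 => a ha Z hZ.
  by rewrite mulrA [a / Z * a^-1]mulrAC divff // mul1r.
rewrite -mulrA.
have -> : ind R [forall z, xi z ==> ~~ t z] * ind R [forall z, ~~ xi z ==> ~~ w z] = 0.
  by move: P; case: [forall z, _]; case: [forall z, _]; rewrite /ind ?mulr0 ?mul0r.
rewrite mulr0 mulr0 /Joint /SpinP; case: ifP => hi; last by rewrite mul0r.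
have [z hz] : exists z, fkfac c sg xi z = 0.
  move: P; rewrite negb_and !negb_forall => /orP [/existsP [z hz] | /existsP [z hz]]; exists z; rewrite fk.
    by move: hz; case: (xi z); case: (t z).
  move: (hi); rewrite hice => /forallP /(_ z).
  by move: hz; case: (xi z); case: (t z); case: (w z).
by rewrite (bigD1 z) //= hz mul0r mulr0.
Qed.

End Meas.


Lemma face_node (f : FaceT D) : (val f, None) \in nodes D (fpar (val f)).
Proof.
by rewrite /nodes mem_cat; apply/orP; left; apply/mapP; exists (val f); rewrite // mem_filter eqxx (valP f).
Qed.

Lemma sig_face par (sg : {ffun FaceT D -> bool}) (f : FaceT D) :
  fpar (val f) = par -> nval (sig_of par sg) (val f, None) = sg f.
Proof. by move=> hp; rewrite nval_sig -?hp ?face_node //= spin_val. Qed.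

Lemma sig_of_build par (s : {ffun NodeT D par -> bool}) (sg : {ffun FaceT D -> bool}) :
  cornT s -> (forall f : FaceT D, fpar (val f) = par -> sg f = nval s (val f, None)) ->
  sig_of par sg = s.
Proof.
move=> /forallP hc Hs; apply/ffunP => x; rewrite ffunE.
have [hpar hD] := nodesP (valP x).
move: (implyP (hc x)) hpar hD (nval_val s x); rewrite /is_corner.
case: (val x) => u [z|] /= hcx hpar hD hn.
  by rewrite spin_out ?hD // hcx.
have hu : u \in D by rewrite hD.
have -> : u = val (SeqSub hu : FaceT D) by [].
by rewrite spin_val Hs // hn.
Qed.

Lemma decomp (R : ringType) (G : {ffun NodeT D false -> bool} -> R) (H : {ffun NodeT D true -> bool} -> R) :
  \sum_(sg : {ffun FaceT D -> bool}) H (sig_of true sg) * G (sig_of false sg)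
  = (\sum_(s | cornT s) H s) * (\sum_(s | cornT s) G s).
Proof.
rewrite big_distrlr /= pair_big_dep /=.
pose phi (sg : {ffun FaceT D -> bool}) := (sig_of true sg, sig_of false sg).
have inj : {in [set: {ffun FaceT D -> bool}] &, injective phi}.
  move=> s1 s2 _ _ E; apply/ffunP => f.
  case hb: (fpar (val f)).
    by rewrite -!(sig_face s1 hb) -(sig_face s2 hb); move: E => [-> _].
  by rewrite -!(sig_face s1 hb) -(sig_face s2 hb); move: E => [_ ->].
rewrite (eq_bigl (mem (phi @: [set: {ffun FaceT D -> bool}]))); last first.
  case=> a b /=; apply/andP/imsetP.
    case=> ha hb.
    pose sg := [ffun f : FaceT D => if fpar (val f) then nval a (val f, None) else nval b (val f, None)].
    exists sg; first by rewrite in_setT.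
    rewrite /phi; congr (_, _); apply/esym; apply: sig_of_build => // f hf; rewrite ffunE hf //.
  case=> sg _ [-> ->]; split; apply/forallP => x; apply/implyP; rewrite ffunE.
    have [_ hD] := nodesP (valP x); move: hD; rewrite /is_corner; case: (val x) => u [z|] //= hD _.
    by rewrite spin_out ?hD.
  have [_ hD] := nodesP (valP x); move: hD; rewrite /is_corner; case: (val x) => u [z|] //= hD _.
  by rewrite spin_out ?hD.
rewrite big_imset //=; apply: eq_bigl => sg; by rewrite inE.
Qed.


Lemma edgeD_sym z z' : edgeD D z z' = edgeD D z' z.
Proof.
rewrite /edgeD; congr andb.
  by rewrite /vadj -abszN opprB -(abszN (z.2 - _)) opprB.
by apply/hasP/hasP => [[u h1 /andP [h2 h3]]|[u h1 /andP [h2 h3]]]; exists u; rewrite ?h2.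
Qed.

Lemma glue_sym x y : glue D x y = glue D y x.
Proof.
case: x => u [z|]; case: y => u' [z'|] //=.
by rewrite eq_sym edgeD_sym.
Qed.

Lemma gadj_sym par (op : pred (VtxT D)) : symmetric (@gadj D par op).
Proof.
move=> x y; rewrite /gadj glue_sym; congr orb.
by apply: eq_existsb => z; rewrite orbC.
Qed.

Section Count.
Variable xi : {ffun VtxT D -> bool}.
Local Notation e := (adjo xi).
Local Notation rho := (fingraph.root e).
Let esymE : connect_sym e := sym_connect_sym (gadj_sym _).

Definition FR := [set r | (rho r == r) && [forall x, (rho x == r) ==> ~~ is_corner (val x)]].
Definition Sset := [set s : {ffun NodeT D true -> bool} | cornT s && perpo s xi].

Lemma perpo_root (s : {ffun NodeT D true -> bool}) :
  perpo s xi = [forall x, s x == s (rho x)].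
Proof.
apply/idP/idP.
  move=> /forallP H; apply/forallP => x; exact: (implyP (forallP (H x) _) (connect_root e x)).
move=> /forallP H; apply/forallP => x; apply/forallP => y; apply/implyP => /(fingraph.rootP esymE) hr.
by rewrite (eqP (H x)) (eqP (H y)) hr.
Qed.

Lemma S_val (s : {ffun NodeT D true -> bool}) x : s \in Sset ->
  s x = if rho x \in FR then s (rho x) else true.
Proof.
rewrite inE perpo_root => /andP [/forallP hc /forallP hp].
rewrite (eqP (hp x)); case: ifP => // hF.
move/negbT: hF; rewrite inE root_root // ?eqxx /= negb_forall => /existsP [y].
rewrite negb_imply negbK => /andP [/eqP hy hcy].
by rewrite -hy -(eqP (hp y)) (implyP (hc y)).
Qed.

Definition restr (s : {ffun NodeT D true -> bool}) : {ffun NodeT D true -> bool} :=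
  [ffun x => if x \in FR then s x else true].

Lemma card_S : #|Sset| = (2 ^ #|FR|)%N.
Proof.
have hinj : {in Sset &, injective restr}.
  move=> s1 s2 h1 h2 E; apply/ffunP => x.
  by rewrite (S_val x h1) (S_val x h2) -!(ffunE (fun x => if x \in FR then _ x else true)) -/(restr s1) E.
rewrite -(card_in_imset hinj).
have -> : (2 = #|{: bool}|)%N by rewrite card_bool.
rewrite -(card_pffun_on true FR predT).
apply: eq_card => g; apply/imsetP/pffun_onP.
  case=> s hs ->; split; last by move=> ? _.
  by apply/subsetP => x; rewrite unfold_in /= ffunE; case: ifP.
case=> hsup _.
exists [ffun x => g (rho x)].
  rewrite inE perpo_root; apply/andP; split; apply/forallP => x; rewrite ?ffunE.
    apply/implyP => hcx; apply/negPn/negP => hg.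
    have : rho x \in FR by apply: (subsetP hsup); rewrite unfold_in /= (negbTE hg).
    by rewrite inE => /andP [_ /forallP /(_ x)]; rewrite eqxx hcx.
  by rewrite root_root.
apply/ffunP => x; rewrite !ffunE; case: ifP => hx.
  by move: hx; rewrite inE => /andP [/eqP -> _].
by apply/negPn/negP => hg; move: (subsetP hsup x); rewrite unfold_in /= hx (negbTE hg) => /(_ isT).
Qed.

Definition cls (x : NodeT D true) := [set y | connect e x y].
Definition NC := [set C in clusters e | [forall y in C, ~~ is_corner (val y)]].

Lemma card_FR : #|FR| = nbclusters xi.
Proof.
have hinj : {in FR &, injective cls}.
  move=> r1 r2; rewrite !inE => /andP [/eqP h1 _] /andP [/eqP h2 _] E.
  have : r2 \in cls r1 by rewrite E inE connect0.
  by rewrite inE => /(fingraph.rootP esymE); rewrite h1 h2.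
rewrite -(card_in_imset hinj) /nbclusters -/NC; apply: eq_card => C.
apply/imsetP/idP.
  case=> r; rewrite inE => /andP [/eqP hr /forallP hF] ->.
  rewrite inE; apply/andP; split; first by apply/imsetP; exists r.
  apply/forallP => y; apply/implyP; rewrite inE => /(fingraph.rootP esymE) hy.
  by apply: (implyP (hF y)); rewrite -hy hr.
rewrite inE => /andP [/imsetP [x _ ->] /forallP hall].
exists (rho x).
  rewrite inE root_root // eqxx /=; apply/forallP => y; apply/implyP => /eqP hy.
  by apply: (implyP (hall y)); rewrite inE; apply/(fingraph.rootP esymE).
apply/setP => y; rewrite !inE.
by apply/idP/idP => /(fingraph.rootP esymE) h; apply/(fingraph.rootP esymE); rewrite ?root_root in h *.
Qed.

Local Notation e1 := (@Defs.adj1 D xi).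
Lemma adj1_sym : symmetric e1.
Proof. by move=> x y; rewrite /Defs.adj1 /adjo (gadj_sym _ x y) andbC. Qed.
Let esym1 : connect_sym e1 := sym_connect_sym adj1_sym.
Definition cls1 (x : NodeT D true) := [set y | connect e1 x y].

Lemma e_e1 x y : connect e x y -> connect e1 x y.
Proof. by apply: connect_sub => a b h; apply: connect1; rewrite /Defs.adj1 h. Qed.

Lemma clsA x : (forall y, connect e x y -> ~~ is_corner (val y)) -> cls1 x = cls x.
Proof.
move=> H; apply/setP => y; rewrite !inE; apply/idP/idP; last exact: e_e1.
case/connectP => p hp ->.
suff: forall a, connect e x a -> path e1 a p -> connect e x (last a p) by apply; [exact: connect0|].
elim: p {hp} => [|b p IH] a ha //= /andP [hab hp]; apply: IH hp.
case/orP: hab => [h|/andP [hc _]]; first exact: connect_trans ha (connect1 h).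
by move: (H a ha); rewrite hc.
Qed.

Lemma clsB x y x0 : connect e x y -> is_corner (val y) -> is_corner (val x0) -> cls1 x = cls1 x0.
Proof.
move=> hxy hy hx0.
have h : connect e1 x x0.
  by apply: connect_trans (e_e1 hxy) (connect1 _); rewrite /Defs.adj1 hy hx0 orbT.
apply/setP => z; rewrite !inE; apply/idP/idP => hz.
  by apply: connect_trans hz; rewrite esym1.
exact: connect_trans h hz.
Qed.

Lemma k1_eq : k1 xi = ([exists x : NodeT D true, is_corner (val x)] + nbclusters xi)%N.
Proof.
rewrite /nbclusters -/NC /k1.
have hNC : forall C, (C \in NC) = [exists x, (C == cls1 x) && [forall y, connect e x y ==> ~~ is_corner (val y)]].
  move=> C; rewrite inE; apply/andP/existsP.
    case=> /imsetP [x _ ->] /forallP hall; exists x; apply/andP; split.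
      by rewrite clsA // => y hy; apply: (implyP (hall y)); rewrite inE.
    by apply/forallP => y; apply/implyP => hy; apply: (implyP (hall y)); rewrite inE.
  case=> x /andP [/eqP -> /forallP hall].
  have hA : forall y, connect e x y -> ~~ is_corner (val y) by move=> y; apply/implyP.
  rewrite clsA //; split; first by apply/imsetP; exists x.
  by apply/forallP => y; apply/implyP; rewrite inE; apply: hA.
case: (pickP (fun x : NodeT D true => is_corner (val x))) => [x0 hx0 | hno].
  have -> : clusters e1 = cls1 x0 |: NC.
    apply/setP => C; rewrite in_setU1 hNC; apply/imsetP/idP.
      case=> x _ ->; rewrite -/(cls1 x).
      case: (boolP [exists y, connect e x y && is_corner (val y)]).
        by case/existsP => y /andP [hxy hy]; rewrite (clsB hxy hy hx0) eqxx.
      rewrite negb_exists => /forallP hn; apply/orP; right; apply/existsP; exists x.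
      rewrite eqxx /=; apply/forallP => y; apply/implyP => hy.
      by move: (hn y); rewrite hy.
    case/orP => [/eqP ->|/existsP [x /andP [/eqP -> _]]]; by eexists.
  rewrite cardsU1 hNC.
  have -> : [exists x, (cls1 x0 == cls1 x) && [forall y, connect e x y ==> ~~ is_corner (val y)]] = false.
    apply/negbTE; rewrite negb_exists; apply/forallP => x; apply/negP => /andP [/eqP E /forallP hall].
    have : x0 \in cls1 x by rewrite -E inE connect0.
    rewrite clsA; last by move=> y; apply/implyP.
    by rewrite inE => /(implyP (hall x0)); rewrite hx0.
  have -> : [exists x : NodeT D true, is_corner (val x)] by apply/existsP; exists x0.
  by [].
have -> : [exists x : NodeT D true, is_corner (val x)] = false.
  by apply/negbTE; rewrite negb_exists; apply/forallP => x; rewrite hno.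
rewrite add0n; apply: eq_card => C; rewrite hNC; apply/imsetP/idP.
  case=> x _ ->; apply/existsP; exists x; rewrite -/(cls1 x) eqxx /=.
  by apply/forallP => y; apply/implyP => _; exact: (negbT (hno y)).
by case/existsP => x /andP [/eqP -> _]; eexists.
Qed.

End Count.

End Geo.

Section Main.
Variables (D : seq pt) (R : realFieldType) (c : R).
Hypothesis hc : 1 <= c.

Definition Gf (xi : {ffun VtxT D -> bool}) (s : {ffun NodeT D false -> bool}) : R :=
  (c - 1) ^+ (nopen xi - nomega s)%N * ind R (perpb s xi).

Lemma Joint_eq2 (sg : {ffun FaceT D -> bool}) (xi : {ffun VtxT D -> bool}) :
  Joint c sg xi = (SpinZ D c)^-1 * (ind R (perpo (sig_of true sg) xi) * Gf xi (sig_of false sg)).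
Proof. by rewrite (Joint_eq hc) /Gf; congr (_ * _); rewrite mulrAC mulrC mulrA. Qed.

Lemma sum_perpo (xi : {ffun VtxT D -> bool}) : \sum_(s | cornT s) ind R (perpo s xi) = 2 ^+ nbclusters xi.
Proof.
rewrite /ind -big_mkcondr sumr_const -card_FR -natrX -card_S; congr (_ *+ _).
by apply: eq_card => s; rewrite !inE.
Qed.

Lemma FKIs_eq (xi : {ffun VtxT D -> bool}) : FKIs c xi =
  (SpinZ D c)^-1 * (2 ^+ nbclusters xi * \sum_(s | cornT s) Gf xi s).
Proof.
rewrite /FKIs (eq_bigr _ (fun sg _ => Joint_eq2 sg xi)) -mulr_sumr.
by rewrite (decomp (fun s => Gf xi s) (fun s => ind R (perpo s xi))) sum_perpo.
Qed.

Lemma sumG (xi : {ffun VtxT D -> bool}) : \sum_(s | cornT s) Gf xi s =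
  \sum_(s : {ffun NodeT D false -> bool} |
           [forall x, is_corner (val x) ==> s x] && [forall z, omega s z ==> xi z])
          (c - 1) ^+ (nopen xi - nomega s)%N.
Proof.
rewrite big_mkcondr /=; apply: eq_bigr => s hs.
rewrite /Gf perpb_gen; last by move=> x y; apply: glue_corn.
have -> : [forall z, ~~ xi z ==> ~~ omega s z] = [forall z, omega s z ==> xi z].
  by apply: eq_forallb => z; case: (xi z); case: (omega s z).
by rewrite /ind; case: ifP; rewrite ?mulr1 ?mulr0.
Qed.

Lemma sum_fk (sg : {ffun FaceT D -> bool}) : \sum_(xi : {ffun VtxT D -> bool}) \prod_z fkfac c sg xi z = 1.
Proof.
pose F (z : VtxT D) (b : bool) : R :=
  if theta (sig_of true sg) z then (if b then 0 else 1)
  else if omega (sig_of false sg) z then (if b then 1 else 0)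
  else (if b then (c - 1) / c else c^-1).
have -> : \sum_(xi : {ffun VtxT D -> bool}) \prod_z fkfac c sg xi z =
          \sum_(xi : {ffun VtxT D -> bool}) \prod_z F z (xi z) by [].
rewrite -bigA_distr_bigA /=; apply: big1 => z _.
rewrite big_bool /F /=; case: ifP => _; first by rewrite add0r.
case: ifP => _; first by rewrite addr0.
by rewrite -[X in _ + X = _]mul1r -mulrDl subrK divff // c_neq0.
Qed.

Lemma SpinP_sum (sg : {ffun FaceT D -> bool}) : SpinP c sg = \sum_xi Joint c sg xi.
Proof. by rewrite /Joint -mulr_sumr sum_fk mulr1. Qed.

Lemma bplus_corn (tau : {ffun NodeT D true -> bool}) (xi : {ffun VtxT D -> bool}) : perpo tau xi -> bplus tau xi = cornT tau.
Proof.
move=> /forallP hp; apply/forallP/forallP => H x.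
  apply/implyP => hx; exact: (implyP (forallP (H x) x)) (introT andP (conj (connect0 _ x) hx)).
apply/forallP => y; apply/implyP => /andP [hxy hy].
by rewrite (eqP (implyP (forallP (hp x) y) hxy)) (implyP (H y)).
Qed.

Lemma sum_tau (tau : {ffun NodeT D true -> bool}) (xi : {ffun VtxT D -> bool}) :
  \sum_(s | cornT s) ind R (perpo s xi) * ind R (s == tau) = ind R (cornT tau && perpo tau xi).
Proof.
case: (boolP (cornT tau)) => ht /=.
  rewrite (bigD1 tau) //= eqxx /ind mulr1 big1 ?addr0 // => s /andP [_ /negbTE ->].
  by rewrite mulr0.
rewrite big1 // => s hs; have -> : (s == tau) = false.
  by apply/negbTE; apply: contraNneq ht => <-.
by rewrite /ind mulr0.
Qed.

End Main.

Theorem lemma7p1 (R : realFieldType) (D : seq pt) (c : R) :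
  is_domain D -> 1 <= c ->
  (* (i) *)
  (exists K : R, 0 < K /\
     forall (sigma : {ffun FaceT D -> bool}) (xi : {ffun VtxT D -> bool}),
       Joint c sigma xi =
       K * ((c - 1) ^+ (nopen xi - nomega (sig_of false sigma))%N
            * ind R (perpo (sig_of true sigma) xi) * ind R (perpb (sig_of false sigma) xi)))
  /\
  (* (ii) *)
  (exists Z : R, 0 < Z /\
     forall xi : {ffun VtxT D -> bool},
       FKIs c xi =
       (2 * Z)^-1 * 2 ^+ k1 xi *
       \sum_(s : {ffun NodeT D false -> bool} |
               [forall x, is_corner (val x) ==> s x] && [forall z, omega s z ==> xi z])
          (c - 1) ^+ (nopen xi - nomega s)%N)
  /\
  (* (iii) *)
  (forall tau : {ffun NodeT D true -> bool},
     \sum_(xi : {ffun VtxT D -> bool}) FKIs c xi * assignP R xi tau =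
     \sum_(sigma : {ffun FaceT D -> bool}) SpinP c sigma * ind R (sig_of true sigma == tau)).
Proof.
move=> _ hc.
have hZ : 0 < SpinZ D c by apply: SpinZ_gt0.
set K := (SpinZ D c)^-1.
have hK : 0 < K by rewrite invr_gt0.
have hK0 : K != 0 by rewrite gt_eqF.
have h2 : (0 : R) < 2 by rewrite ltr0n.
split.
  by exists K; split => // sg xi; apply: Joint_eq.
split.
  pose b := [exists x : NodeT D true, is_corner (val x)].
  have hB : (0 : R) < 2 ^+ b by rewrite exprn_gt0.
  exists (2 ^+ b / K / 2); split; first by rewrite !divr_gt0.
  move=> xi; rewrite (FKIs_eq hc) sumG k1_eq exprD -/K -/b.
  set S := \sum_(_ | _) _.
  clear hK; move: (2 ^+ nbclusters xi) (2 ^+ b) (gt_eqF hB) S K hK0 => N B hB0 S' K' hK'.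
  have h20 : (2 : R) != 0 by rewrite gt_eqF.
  by field; rewrite hK' hB0.
move=> tau.
have -> : \sum_sg SpinP c sg * ind R (sig_of true sg == tau) =
          \sum_xi \sum_sg Joint c sg xi * ind R (sig_of true sg == tau).
  rewrite exchange_big /=; apply: eq_bigr => sg _; by rewrite (SpinP_sum hc) mulr_suml.
apply: eq_bigr => xi _.
rewrite (eq_bigr (fun sg => (K * (ind R (perpo (sig_of true sg) xi) * ind R (sig_of true sg == tau)))
                             * Gf c xi (sig_of false sg))); last first.
  move=> sg _; rewrite (Joint_eq2 hc) -/K.
  move: (ind R _) (ind R _) (Gf c xi _) => a i g.
  by rewrite -!mulrA [g * a]mulrC.
rewrite (decomp (fun s => Gf c xi s) (fun s => K * (ind R (perpo s xi) * ind R (s == tau)))).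
rewrite -mulr_sumr sum_tau (FKIs_eq hc) -/K /assignP.
set S := \sum_(_ | _) _.
case: (boolP (perpo tau xi)) => hp /=; last by rewrite andbF /ind /= !mulr0 mul0r.
rewrite bplus_corn // andbT.
case: (cornT tau); rewrite /ind /= ?mulr0 ?mul0r //.
rewrite exprVn mulr1.
have hN : (2 : R) ^+ nbclusters xi != 0 by rewrite expf_neq0 // gt_eqF.
clear hK hK0; move: (2 ^+ nbclusters xi) hN S K => N hN S' K'.
by rewrite -mulrA [N * S']mulrC -mulrA mulfV // mulr1.
Qed.
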